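(* For every $r\ge1$, $C_{1,r}(a)=G_{1,r+1}(a)$, that is, \[ (-1)^r\sum_{(n_1,\dots,n_r)\in S_r}\frac{B_{n_1}(a)}{n_1!}\cdots\frac{B_{n_r}(a)}{n_r!}=(-1)^r\lambda_{r+1}(a), \] where $S_r=\{(n_1,\dots,n_r)\in\mathbb Z_{\ge0}^r: n_1+\dots+n_r=r,\ n_{j+1}+\dots+n_r\le r-j\ (1\le j<r)\}$.
   Context: Bernoulli polynomials $B_n(a)$: $\sum_{n\ge0}B_n(a)x^n/n!=xe^{ax}/(e^x-1)$. $C_{1,r}(a)$ denotes the left-hand side of the displayed identity. Let $L(a,t)=\sum_{n\ge1}\lambda_n(a)t^n\in\mathbb Q[a][[t]]$ be the compositional inverse (in $t$) of $e^{-at}(e^t-1)$, equivalently the unique such series with $e^{L(a,t)}(1-te^{(a-1)L(a,t)})=1$. The generalized Gregory polynomials $G_{m,n}(a)$ are defined by $\sum_{m,n\ge0}G_{m,n}(a)x^my^n=\dfrac{yL(a,-x)^2-xL(a,-y)^2}{-L(a,-x)+L(a,-y)}$. *)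

(* Defs.v *)
(* All objects live in Q[a] = {poly rat}, the variable a being 'X. *)
From mathcomp Require Import all_boot all_algebra.
Set Implicit Arguments. Unset Strict Implicit. Unset Printing Implicit Defensive.
Import GRing.Theory Num.Theory.
Local Open Scope ring_scope.

(* B : nat -> {poly rat} is the sequence of Bernoulli polynomials B_n(a), i.e.
   sum_n B_n(a) x^n/n! = x e^{ax}/(e^x-1).  Written coefficientwise after
   multiplying by (e^x-1)/x = sum_{i>=0} x^i/(i+1)! :
     sum_{k=0}^n (B_k(a)/k!) * 1/(n-k+1)! = a^n/n!   for all n.
   This determines B uniquely (triangular system with unit diagonal). *)
Definition is_bernoulli_poly (B : nat -> {poly rat}) : Prop :=
  forall n : nat,
    \sum_(k < n.+1) ((k`!%:R)^-1 * ((n - k).+1`!%:R)^-1 : rat) *: B k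
    = ((n`!%:R)^-1 : rat) *: 'X^n.

(* coefficient of t^m in e^{-at}(e^t - 1) = (sum_j (-a)^j t^j/j!)(sum_{i>=1} t^i/i!) *)
Definition fcoef (m : nat) : {poly rat} :=
  \sum_(j < m) (((-1) ^+ j / ((j`!)%:R * ((m - j)`!)%:R)) : rat) *: 'X^j.

(* truncation sum_{1<=n<=N} lam_n t^n of L(a,t), as a polynomial in t over Q[a] *)
Definition Ltrunc (lam : nat -> {poly rat}) (N : nat) : {poly {poly rat}} :=
  \sum_(1 <= n < N.+1) (lam n)%:P * 'X^n.

(* L(a,t) = sum_{n>=1} lam_n t^n is the compositional inverse (in t) of
   f(t) = e^{-at}(e^t-1) = sum_{m>=1} fcoef m t^m, i.e. f(L(a,t)) = t in Q[a][[t]]: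
   the coefficient of t^N in sum_{m>=1} fcoef m * L^m is [N = 1] for every N
   (only m <= N and lam_n with n <= N contribute to that coefficient). *)
Definition is_comp_inv (lam : nat -> {poly rat}) : Prop :=
  forall N : nat,
    (\sum_(1 <= m < N.+1) (fcoef m)%:P * (Ltrunc lam N) ^+ m)`_N = (N == 1%N)%:R.

(* membership in S_r, for n = (n_1,...,n_r) stored 0-based as n : 'I_r -> nat
   (values bounded by r, automatic since the entries sum to r):
   n_1+...+n_r = r and n_{j+1}+...+n_r <= r - j for 1 <= j < r. *)
Definition inS (r : nat) (n : {ffun 'I_r -> 'I_r.+1}) : bool :=
  ((\sum_(i < r) (n i : nat))%N == r) &&
  [forall j : 'I_r, (1 <= j)%N ==> ((\sum_(i < r | (j <= i)%N) (n i : nat))%N <= r - j)%N].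

(* Main.v *)
Require Import Defs.
From mathcomp Require Import all_boot all_algebra.
From mathcomp Require Import ring.
Set Implicit Arguments. Unset Strict Implicit. Unset Printing Implicit Defensive.
Import GRing.Theory Num.Theory.
Local Open Scope ring_scope.

Section Cong.
Variable R : comNzRingType.
Implicit Types p q s L : {poly R}.

Definition cong K p q := exists s, p - q = 'X^K * s.

Lemma cong_coef K p q i : cong K p q -> (i < K)%N -> p`_i = q`_i.
Proof.
move=> [s hs] hi; apply/eqP; rewrite -subr_eq0 -coefB hs coefXnM hi //.
Qed.

Lemma coef_cong K p q : (forall i, (i < K)%N -> p`_i = q`_i) -> cong K p q.
Proof.
move=> h; exists (drop_poly K (p - q)).
have ht : take_poly K (p - q) = 0.
  by apply/polyP=> i; rewrite coef_take_poly coef0 coefB; case: ifP => // /h ->; rewrite subrr.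
by rewrite -{1}(poly_take_drop K (p - q)) ht add0r mulrC.
Qed.

Lemma cong_refl K p : cong K p p.
Proof. by exists 0; rewrite subrr mulr0. Qed.

Lemma cong_sym K p q : cong K p q -> cong K q p.
Proof. by move=> [s hs]; exists (- s); rewrite mulrN -hs opprB. Qed.

Lemma cong_trans K p q s : cong K p q -> cong K q s -> cong K p s.
Proof.
move=> [a ha] [b hb]; exists (a + b).
by rewrite mulrDr -ha -hb addrA subrK.
Qed.

Lemma congMr K p q s : cong K p q -> cong K (p * s) (q * s).
Proof. by move=> [a ha]; exists (a * s); rewrite -mulrBl ha mulrA. Qed.

Lemma congMl K p q s : cong K p q -> cong K (s * p) (s * q).
Proof. by rewrite ![s * _]mulrC; apply: congMr. Qed.

Lemma congM K p q p' q' : cong K p q -> cong K p' q' -> cong K (p * p') (q * q').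
Proof. move=> h1 h2; apply: cong_trans (congMr _ h1) (congMl _ h2). Qed.

Lemma congX K p q n : cong K p q -> cong K (p ^+ n) (q ^+ n).
Proof.
move=> h; elim: n => [|n IH]; first by rewrite !expr0; apply: cong_refl.
by rewrite !exprS; apply: congM.
Qed.

Lemma cong_le K K' p q : (K' <= K)%N -> cong K p q -> cong K' p q.
Proof. by move=> hK h; apply: coef_cong => i hi; apply: cong_coef h (leq_trans hi hK). Qed.

Lemma cong_compr K p L L' : cong K L L' -> cong K (p \Po L) (p \Po L').
Proof.
move=> h; apply: coef_cong => i hi; rewrite !coef_comp_poly.
by apply: eq_bigr => j _; rewrite (cong_coef (congX j h) hi).
Qed.

Lemma X_drop p : p`_0 = 0 -> p = 'X * drop_poly 1 p.
Proof.
move=> h0; rewrite -{1}(poly_take_drop 1 p) mulrC.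
suff -> : take_poly 1 p = 0 by rewrite add0r.
by apply/polyP=> i; rewrite coef_take_poly coef0; case: i => //.
Qed.

Lemma cong_compl K p q L : L`_0 = 0 -> cong K p q -> cong K (p \Po L) (q \Po L).
Proof.
move=> h0 [s hs]; exists ((drop_poly 1 L) ^+ K * (s \Po L)).
rewrite -comp_polyB hs comp_polyM rmorphXn /= comp_polyX {1}(X_drop h0).
by rewrite exprMn mulrA.
Qed.

End Cong.

Definition beta (B : nat -> {poly rat}) n : {poly rat} := ((n`!%:R)^-1 : rat) *: B n.
Definition phi B K : {poly {poly rat}} := \poly_(i < K) beta B i.
Definition fp K : {poly {poly rat}} := \poly_(i < K) fcoef i.
Definition em K : {poly {poly rat}} :=
  \poly_(j < K) ((((-1) ^+ j / (j`!)%:R) : rat) *: ('X^j : {poly rat})).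
Definition gg K : {poly {poly rat}} :=
  \poly_(i < K) (if i == 0%N then 0 else (((i`!)%:R)^-1 : rat)%:P).
Definition ea K : {poly {poly rat}} :=
  \poly_(n < K) ((((n`!)%:R)^-1 : rat) *: ('X^n : {poly rat})).

Lemma fp_emg K : cong K (fp K) (em K * gg K).
Proof.
apply: coef_cong => m hm; rewrite coef_poly hm coefM big_ord_recr /= subnn.
have -> : (gg K)`_0 = 0 by rewrite coef_poly; case: ifP.
rewrite mulr0 addr0 /fcoef; apply: eq_bigr => j _.
rewrite !coef_poly (ltn_trans (ltn_ord j) hm) (leq_ltn_trans (leq_subr j m) hm).
rewrite subn_eq0 leqNgt (ltn_ord j) /= [_ * _%:P]mulrC mul_polyC scalerA.
congr (_ *: _); rewrite invfM; ring.
Qed.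

Lemma gg_phi B K : is_bernoulli_poly B -> cong K (gg K * phi B K) ('X * ea K).
Proof.
move=> HB; apply: coef_cong => -[|m] hm.
  by rewrite coefM big_ord1 coefXM /= coef_poly; case: ifP => _; rewrite /= mul0r.
rewrite coefMr big_ord_recr /= subnn.
have -> : (gg K)`_0 = 0 by rewrite coef_poly; case: ifP.
rewrite mul0r addr0 coefXM /= coef_poly (ltn_trans (ltnSn m) hm) -HB.
apply: eq_bigr => k _.
have hk : (k < K)%N by apply: leq_ltn_trans (leq_trans (leq_ord k) (leqnSn m)) hm.
rewrite !coef_poly hk (leq_ltn_trans (leq_subr k m.+1) hm) subn_eq0 leqNgt.
rewrite ltnS (leq_ord k) /= mul_polyC /beta scalerA subSn ?(leq_ord k) //.
by rewrite mulrC.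
Qed.

Lemma alt_binom (n : nat) :
  \sum_(j < n.+1) (((-1) ^+ j / ((j`!)%:R * ((n - j)`!)%:R)) : rat) = (n == 0%N)%:R.
Proof.
have h : \sum_(j < n.+1) (((-1) ^+ j / ((j`!)%:R * ((n - j)`!)%:R)) : rat)
    = ((n`!)%:R)^-1 * (1 - 1) ^+ n.
  rewrite exprBn big_distrr /=; apply: eq_bigr => j _.
  rewrite !expr1n !mulr1 -mulr_natr.
  have hf : ((n`!)%:R : rat) = ('C(n, j))%:R * ((j`!)%:R * ((n - j)`!)%:R).
    by rewrite -!natrM bin_fact // -ltnS.
  have hne : ((j`!)%:R * ((n - j)`!)%:R : rat) != 0.
    by rewrite mulf_neq0 // pnatr_eq0 -lt0n fact_gt0.
  have hc : (('C(n, j))%:R : rat) != 0.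
    by rewrite pnatr_eq0 -lt0n bin_gt0 -ltnS.
  rewrite hf invfM; field.
by rewrite hc andbT !pnatr_eq0 -!lt0n !fact_gt0.
rewrite h subrr; case: n {h} => [|n]; first by rewrite expr0 mulr1 invr1.
by rewrite expr0n mulr0.
Qed.

Lemma em_ea K : cong K (em K * ea K) 1.
Proof.
apply: coef_cong => n hn; rewrite coefM coef1.
transitivity ((\sum_(j < n.+1) (((-1) ^+ j / ((j`!)%:R * ((n - j)`!)%:R)) : rat)) *: ('X^n : {poly rat})).
  rewrite scaler_suml; apply: eq_bigr => j _.
  have hj : (j < K)%N by apply: leq_ltn_trans (leq_ord j) hn.
  rewrite !coef_poly hj (leq_ltn_trans (leq_subr j n) hn).
  rewrite -scalerAl -scalerAr scalerA -exprD subnKC ?(leq_ord j) //.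
  by congr (_ *: _); rewrite invfM; ring.
rewrite alt_binom; case: n {hn} => [|n] /=; first by rewrite scale1r expr0.
by rewrite scale0r.
Qed.

Lemma fp_phi B K : is_bernoulli_poly B -> cong K (fp K * phi B K) 'X.
Proof.
move=> HB.
apply: cong_trans (congMr _ (fp_emg K)) _.
rewrite -mulrA.
apply: cong_trans (congMl _ (gg_phi K HB)) _.
rewrite mulrCA -[X in cong _ _ X]mulr1.
by apply: congMl; apply: em_ea.
Qed.

Lemma coef_Ltrunc lam M i :
  (Ltrunc lam M)`_i = if (0 < i <= M)%N then lam i else 0.
Proof.
elim: M => [|M IH].
  by rewrite /Ltrunc big_geq // coef0; case: i => // i; rewrite ltn0 andbF.
rewrite /Ltrunc big_nat_recr //= coefD -/(Ltrunc lam M) IH coefCM coefXn.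
have [->|ne] := eqVneq i M.+1.
  by rewrite ltnn andbF mulr1 add0r leqnn.
by rewrite mulr0 addr0 (leq_eqVlt i M.+1) (negbTE ne) ltnS.
Qed.

Lemma fcoef0 : fcoef 0 = 0.
Proof. by rewrite /fcoef big_ord0. Qed.

Lemma fp_comp n Q :
  fp n.+1 \Po Q = \sum_(1 <= m < n.+1) (fcoef m)%:P * Q ^+ m.
Proof.
rewrite /fp poly_def rmorph_sum /=.
rewrite -(big_mkord xpredT (fun i => (fcoef i *: 'X^i) \Po Q)) big_ltn //.
rewrite fcoef0 scale0r rmorph0 add0r; apply: eq_bigr => i _.
by rewrite -mul_polyC comp_polyM comp_polyC rmorphXn /= comp_polyX.
Qed.

Lemma comp_inv_cong lam M :
  is_comp_inv lam -> cong M.+1 (fp M.+1 \Po Ltrunc lam M) 'X.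
Proof.
move=> H; apply: coef_cong => N hN.
have hL0 : (Ltrunc lam M)`_0 = 0 by rewrite coef_Ltrunc.
have c1 : cong N.+1 (fp M.+1) (fp N.+1).
  by apply: coef_cong => i hi; rewrite !coef_poly hi (leq_trans hi hN).
have c2 : cong N.+1 (Ltrunc lam M) (Ltrunc lam N).
  apply: coef_cong => i hi; rewrite !coef_Ltrunc.
  have h1 : (i <= N)%N by [].
  by rewrite h1 (leq_trans h1 hN).
rewrite (cong_coef (cong_compl hL0 c1) (ltnSn N)).
rewrite (cong_coef (cong_compr _ c2) (ltnSn N)).
by rewrite fp_comp H coefX.
Qed.

Lemma L_fix B lam M : is_bernoulli_poly B -> is_comp_inv lam ->
  cong M.+1 (Ltrunc lam M) ('X * (phi B M.+1 \Po Ltrunc lam M)).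
Proof.
move=> HB H.
have hL0 : (Ltrunc lam M)`_0 = 0 by rewrite coef_Ltrunc.
have h1 := cong_compl hL0 (fp_phi M.+1 HB).
rewrite comp_polyX comp_polyM in h1.
apply: cong_trans (cong_sym h1) _.
by apply: congMr; apply: comp_inv_cong.
Qed.

Lemma e_small lam M k N : (N < k)%N -> ((Ltrunc lam M) ^+ k)`_N = 0.
Proof.
move=> h.
have hL0 : (Ltrunc lam M)`_0 = 0 by rewrite coef_Ltrunc.
by rewrite (X_drop hL0) exprMn coefXnM h.
Qed.

Lemma phi_comp B K Q : phi B K \Po Q = \sum_(x < K) (beta B x)%:P * Q ^+ x.
Proof.
rewrite /phi poly_def rmorph_sum /=; apply: eq_bigr => i _.
by rewrite -mul_polyC comp_polyM comp_polyC rmorphXn /= comp_polyX.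
Qed.

Lemma e_rec B lam M k N : is_bernoulli_poly B -> is_comp_inv lam -> (N.+1 < M.+1)%N ->
  ((Ltrunc lam M) ^+ k.+1)`_N.+1 =
  \sum_(x < M.+1) beta B x * ((Ltrunc lam M) ^+ (k + x))`_N.
Proof.
move=> HB H hN.
rewrite exprSr (cong_coef (congMl _ (L_fix M HB H)) hN) mulrCA coefXM /=.
rewrite phi_comp mulr_sumr coef_sum; apply: eq_bigr => x _.
by rewrite mulrCA coefCM exprD.
Qed.

Fixpoint Hq (B : nat -> {poly rat}) (M N k : nat) : {poly rat} :=
  match N with
  | 0 => (k == 1)%:R
  | N'.+1 => match k with 0 => 0 | k'.+1 => \sum_(x < M) beta B x * Hq B M N' (k' + x) end
  end.

Lemma beta0 B : is_bernoulli_poly B -> beta B 0 = 1.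
Proof.
move=> HB; have := HB 0%N; rewrite big_ord1 /= /beta.
rewrite invr1.
by rewrite mulr1 !scale1r expr0.
Qed.

Lemma e_H B lam r N k : is_bernoulli_poly B -> is_comp_inv lam -> (N <= r)%N ->
  ((Ltrunc lam r.+1) ^+ k)`_N.+1 = Hq B r.+1 N k.
Proof.
move=> HB H; elim: N k => [|N IH] [|j] hN /=.
- by rewrite expr0 coef1.
- rewrite (e_rec _ HB H) // big_ord_recl /= big1 ?addr0; last first.
    by move=> x _; rewrite e_small ?mulr0 // addnS.
  case: j => [|j]; first by rewrite addn0 expr0 coef1 beta0 // mulr1.
  by rewrite e_small // mulr0.
- by rewrite expr0 coef1.
- rewrite (e_rec _ HB H) // big_ord_recr /= e_small ?mulr0 ?addr0; last first.
    by rewrite addnS ltnS (leq_trans hN) ?leq_addl.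
  apply: eq_bigr => x _ /=.
  by rewrite IH // ltnW.
Qed.

Fixpoint qs (k : nat) (s : seq nat) : bool :=
  if s is x :: s' then (0 < k)%N && qs (k.-1 + x) s' else k == 1%N.

Definition fs N M (f : {ffun 'I_N -> 'I_M}) : seq nat := [seq val (f i) | i <- enum 'I_N].

Definition fcons N M (p : 'I_M * {ffun 'I_N -> 'I_M}) : {ffun 'I_N.+1 -> 'I_M} :=
  [ffun i => if unlift ord0 i is Some j then p.2 j else p.1].
Definition func N M (f : {ffun 'I_N.+1 -> 'I_M}) : 'I_M * {ffun 'I_N -> 'I_M} :=
  (f ord0, [ffun j => f (lift ord0 j)]).

Lemma fcons_bij N M : bijective (@fcons N M).
Proof.
exists (@func N M).
  move=> [x g]; rewrite /func /fcons /= ffunE unlift_none; congr (_, _).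
  by apply/ffunP => j; rewrite !ffunE liftK.
move=> f; apply/ffunP => i; rewrite /fcons /func ffunE.
case: (unliftP ord0 i) => [j ->|->] /=; last by [].
by rewrite ffunE.
Qed.

Lemma fs_cons N M x g : fs (@fcons N M (x, g)) = val x :: fs g.
Proof.
rewrite /fs enum_ordSl /= ffunE unlift_none /=; congr (_ :: _).
by rewrite -map_comp; apply: eq_map => j /=; rewrite ffunE liftK.
Qed.

Lemma enum_ord0 : enum 'I_0 = [::].
Proof. by apply: size0nil; rewrite size_enum_ord. Qed.

Lemma sum_pair (I J : finType) (G : I * J -> {poly rat}) :
  \sum_p G p = \sum_i \sum_j G (i, j).
Proof. by rewrite pair_bigA; apply: eq_bigr => -[]. Qed.

Lemma Cs B M N k :
  \sum_(f : {ffun 'I_N -> 'I_M} | qs k (fs f)) \prod_(i < N) beta B (f i) = Hq B M N k.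
Proof.
elim: N k => [|N IH] k.
  rewrite /= /fs enum_ord0 /=.
  case: (k == 1%N) => /=; last by rewrite big_pred0.
  rewrite (eq_bigr (fun _ => 1)); last by move=> i _; rewrite big_ord0.
  by rewrite sumr_const card_ffun (card_ord 0) expn0.
rewrite big_mkcond (reindex (@fcons N M)) /=; last first.
  by apply: onW_bij; apply: fcons_bij.
rewrite sum_pair.
case: k => [|j] /=.
  by rewrite big1 // => x _; rewrite big1 // => g _; rewrite fs_cons.
apply: eq_bigr => x _.
rewrite -IH [in RHS]big_mkcond mulr_sumr; apply: eq_bigr => g _.
rewrite fs_cons /= big_ord_recl ffunE unlift_none.
case: ifP => _; last by rewrite mulr0.
congr (_ * _); apply: eq_bigr => i _; by rewrite ffunE liftK.
Qed.

Definition pre (s : seq nat) (j : nat) : nat :=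
  (\sum_(0 <= i < size s | (i < j)%N) nth 0%N s i)%N.

Lemma pre0 s : pre s 0 = 0%N.
Proof. by rewrite /pre big_pred0 // => i; rewrite ltn0. Qed.

Lemma pre_cons x s j : pre (x :: s) j.+1 = (x + pre s j)%N.
Proof.
rewrite /pre /= big_mkcond big_nat_recl //= [in RHS]big_mkcond.
by congr (_ + _)%N.
Qed.

Lemma qs_char k s :
  qs k s = (k + sumn s == (size s).+1)%N && all (fun j => j < k + pre s j)%N (iota 0 (size s).+1).
Proof.
elim: s k => [|x s IH] k.
  by rewrite /= pre0 !addn0 andbT; case: k => [|[|k]].
have hi : forall n, iota 0 n.+1 = 0%N :: map S (iota 0 n).
  by move=> n; rewrite /= (iotaDl 1 0).
have ac : forall (P : pred nat) y l, all P (y :: l) = P y && all P l by [].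
have sc : size (x :: s) = (size s).+1 by [].
case: k => [|k]; first by rewrite sc hi ac pre0 addn0 ltnn andFb andbF.
rewrite -[qs k.+1 (x :: s)]/(qs (k + x) s) IH sc [in RHS]hi ac pre0 all_map /=.
rewrite addSn eqSS addnA; congr (_ && _).
congr (_ && _); first by rewrite (pre_cons x s 0) pre0 !addn0 addSn ltnS.
by apply: eq_all => j /=; rewrite pre_cons addSn ltnS addnA.
Qed.


From mathcomp Require Import zify.

Lemma inS_qs r (n : {ffun 'I_r -> 'I_r.+1}) : inS n = qs 1 (fs n).
Proof.
have hs : size (fs n) = r by rewrite size_map size_enum_ord.
have hpre : forall j, pre (fs n) j = (\sum_(i < r | (i < j)%N) n i)%N.
  move=> j; rewrite /pre hs big_mkord; apply: eq_bigr => i _.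
  by rewrite (nth_map i) ?size_enum_ord // nth_ord_enum.
have hsum : sumn (fs n) = (\sum_(i < r) n i)%N.
  by rewrite sumnE big_map big_enum.
rewrite qs_char hs hsum /inS add1n eqSS.
set T := (\sum_(i < r) n i)%N.
have hPS : forall j, ((\sum_(i < r | (i < j)%N) n i) + (\sum_(i < r | (j <= i)%N) n i))%N = T.
  move=> j; rewrite /T [in RHS](bigID (fun i : 'I_r => (i < j)%N)) /=.
  by congr addn; apply: eq_bigl => i; rewrite -leqNgt.
case: eqP => //= hT.
apply/idP/idP.
- move/forallP => h; apply/allP => j; rewrite mem_iota => /andP[_ hj].
  rewrite hpre; have := hPS j.
  case: j hj => [|j] hj /=; first by lia.
  have [hjr|hjr] := ltnP j.+1 r.
    have := h (Ordinal hjr); rewrite /= => hh. lia.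
  have : (\sum_(i < r | (j.+1 <= i)%N) n i)%N = 0%N.
    by rewrite big_pred0 // => i; apply/negbTE; rewrite -ltnNge (leq_trans (ltn_ord i)).
  move=> h0 h1; rewrite hT h0 addn0 in h1; rewrite h1; lia.
- move/allP => h; apply/forallP => j; apply/implyP => hj1.
  have := h j; rewrite mem_iota ltnS (ltnW (ltn_ord j)) hj1 => /(_ isT).
  rewrite hpre; have := hPS j; rewrite hT.
move: (\sum_(i < r | (i < j)%N) n i)%N (\sum_(i < r | (j <= i)%N) n i)%N => A S.
lia.
Qed.

Theorem theorem6p7 (r : nat) (B lam : nat -> {poly rat}) :
  (1 <= r)%N -> is_bernoulli_poly B -> is_comp_inv lam ->
  (-1) ^+ r * \sum_(n : {ffun 'I_r -> 'I_r.+1} | inS n)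
                 \prod_(i < r) ((((n i)`!%:R)^-1 : rat) *: B (n i))
  = (-1) ^+ r * lam r.+1.
Proof.
move=> _ HB H; congr (_ * _).
rewrite (eq_bigl (fun n => qs 1 (fs n))); last by move=> n; exact: inS_qs.
transitivity (Hq B r.+1 r 1); first exact: (Cs B r.+1 r 1).
rewrite -(e_H 1 HB H (leqnn r)) expr1 coef_Ltrunc.
by rewrite ltn0Sn leqnn.
Qed.
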